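(* Let $\mathcal{A},\mathcal{C}$ be small categories and $\Gamma,P:\mathcal{A}^{op}\times\mathcal{A}\times\mathcal{C}^{op}\times\mathcal{C}\to\mathbf{Set}$ functors. Let $S_1$ be the set of dinatural transformations, dinatural in $(z,x)\in\mathcal{A}\times\mathcal{C}$, from $(z',z,x',x)\mapsto\Gamma(z',z,x',x)$ to $(z',z,x',x)\mapsto P(z',z,x',x)$ (components $h_{z,x}:\Gamma(z,z,x,x)\to P(z,z,x,x)$), and let $S_2$ be the set of dinatural transformations, dinatural in $(a,b,x)\in\mathcal{A}^{op}\times\mathcal{A}\times\mathcal{C}$, from $(a',b',x',a,b,x)\mapsto\hom_{\mathcal{A}}(a,b)\times\Gamma(b',a',x',x)$ to $(a',b',x',a,b,x)\mapsto P(a,b,x',x)$ (components $\alpha_{a,b,x}:\hom_{\mathcal{A}}(a,b)\times\Gamma(b,a,x,x)\to P(a,b,x,x)$). Then there is a bijection $J:S_1\to S_2$, natural in $\Gamma$ and $P$, such that $J(h)_{z,z,x}(\mathrm{id}_z,k)=h_{z,x}(k)$ for all $z\in\mathcal{A}$, $x\in\mathcal{C}$, $k\in\Gamma(z,z,x,x)$; its inverse sends $\alpha\in S_2$ to the family $k\mapsto\alpha_{z,z,x}(\mathrm{id}_z,k)$.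
   Context: For difunctors $F,G:\mathcal{B}^{op}\times\mathcal{B}\to\mathcal{D}$, a dinatural transformation $\alpha:F\Rightarrow G$ is a family $\alpha_x:F(x,x)\to G(x,x)$, $x\in\mathcal{B}$, such that for every $f:a\to b$: $G(f,\mathrm{id}_b)\circ\alpha_b\circ F(\mathrm{id}_b,f)=G(\mathrm{id}_a,f)\circ\alpha_a\circ F(f,\mathrm{id}_a)$. When $\mathcal{B}$ is a product of categories, the arguments of functors $\mathcal{B}^{op}\times\mathcal{B}\to\mathbf{Set}$ are reordered freely, and dinaturality is with respect to objects of the product category. In $(a',b',x',a,b,x)$ the primed arguments are the contravariant ones ($a'\in\mathcal{A}$, $b'\in\mathcal{A}^{op}$, $x'\in\mathcal{C}^{op}$). *)

(* Defs.v *)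
Set Implicit Arguments.
Unset Strict Implicit.

(** Categories (morphism equality is Leibniz equality). *)
Record Category := {
  Ob :> Type;
  Hom : Ob -> Ob -> Type;
  idm : forall a, Hom a a;
  comp : forall a b c, Hom b c -> Hom a b -> Hom a c;
  comp_id_l : forall a b (f : Hom a b), comp (idm b) f = f;
  comp_id_r : forall a b (f : Hom a b), comp f (idm a) = f;
  comp_assoc : forall a b c d (h : Hom c d) (g : Hom b c) (f : Hom a b),
      comp h (comp g f) = comp (comp h g) f
}.
Arguments Hom {C} a b : rename.
Arguments idm {C} a : rename.
Arguments comp {C a b c} g f : rename.

Definition op (A : Category) : Category :=
  {| Ob := Ob A;
     Hom a b := @Hom A b a;
     idm a := @idm A a;
     comp a b c g f := @comp A c b a f g;
     comp_id_l a b f := @comp_id_r A b a f;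
     comp_id_r a b f := @comp_id_l A b a f;
     comp_assoc a b c d h g f := eq_sym (@comp_assoc A d c b a f g h) |}.

Definition prodC (A B : Category) : Category.
Proof.
  refine {| Ob := (Ob A * Ob B)%type;
            Hom p q := (@Hom A (fst p) (fst q) * @Hom B (snd p) (snd q))%type;
            idm p := (@idm A (fst p), @idm B (snd p));
            comp p q r g f := (comp (fst g) (fst f), comp (snd g) (snd f)) |}.
  - intros [a1 b1] [a2 b2] [f g]; simpl; rewrite !comp_id_l; reflexivity.
  - intros [a1 b1] [a2 b2] [f g]; simpl; rewrite !comp_id_r; reflexivity.
  - intros [] [] [] [] [] [] []; simpl; rewrite !comp_assoc; reflexivity.
Defined.

Record Functor (A B : Category) := {
  fobj :> Ob A -> Ob B;
  fmap : forall a b, @Hom A a b -> @Hom B (fobj a) (fobj b);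
  fmap_id : forall a, fmap (idm a) = idm (fobj a);
  fmap_comp : forall a b c (g : @Hom A b c) (f : @Hom A a b),
      fmap (comp g f) = comp (fmap g) (fmap f)
}.
Arguments fmap {A B} F {a b} f : rename.

Record SetFunctor (B : Category) := {
  F0 :> Ob B -> Type;
  F1 : forall a b, @Hom B a b -> F0 a -> F0 b;
  F1_id : forall a (u : F0 a), F1 (idm a) u = u;
  F1_comp : forall a b c (g : @Hom B b c) (f : @Hom B a b) (u : F0 a),
      F1 (comp g f) u = F1 g (F1 f u)
}.
Arguments F1 {B} F {a b} f u : rename.

Local Unset Implicit Arguments.
Record NatTrans (B : Category) (F G : SetFunctor B) := {
  eta :> forall (c : Ob B), F c -> G c;
  eta_nat : forall a b (f : @Hom B a b) (u : F a),
      eta b (F1 F f u) = F1 G f (eta a u)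
}.
Arguments eta {B F G} _ c _.
Local Set Implicit Arguments.

Definition precomp (A B : Category) (R : Functor A B) (G : SetFunctor B)
  : SetFunctor A.
Proof.
  refine {| F0 a := G (R a); F1 a b f u := F1 G (fmap R f) u |}.
  - intros a u; rewrite fmap_id; apply F1_id.
  - intros a b c g f u; rewrite fmap_comp; apply F1_comp.
Defined.

Definition sfprod (B : Category) (F G : SetFunctor B) : SetFunctor B.
Proof.
  refine {| F0 c := (F c * G c)%type;
            F1 a b f u := (F1 F f (fst u), F1 G f (snd u)) |}.
  - intros a [u v]; simpl; rewrite !F1_id; reflexivity.
  - intros a b c g f [u v]; simpl; rewrite !F1_comp; reflexivity.
Defined.

Definition homF (A : Category) : SetFunctor (prodC (op A) A).
Proof.
  refine (@Build_SetFunctor (prodC (op A) A)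
            (fun p : Ob A * Ob A => @Hom A (fst p) (snd p))
            (fun (p q : Ob A * Ob A)
                 (f : (@Hom A (fst q) (fst p) * @Hom A (snd p) (snd q))%type) h =>
              comp (snd f) (comp h (fst f))) _ _).
  - intros [a b] h; simpl; rewrite comp_id_l, comp_id_r; reflexivity.
  - intros [] [] [] [g' g] [f' f] h; simpl.
    rewrite !comp_assoc; reflexivity.
Defined.

Definition dinatural (B : Category) (F G : SetFunctor (prodC (op B) B))
  (alpha : forall x : Ob B, F (x, x) -> G (x, x)) : Prop :=
  forall (a b : Ob B) (f : @Hom B a b) (u : F (b, a)),
    @F1 _ G (b, b) (a, b) (f, idm b)
        (alpha b (@F1 _ F (b, a) (b, b) (idm b, f) u))
    = @F1 _ G (a, a) (a, b) (idm a, f)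
        (alpha a (@F1 _ F (b, a) (a, a) (f, idm a) u)).

(** The domain category A^op x A x C^op x C of Gamma and P. *)
Definition Q (A C : Category) : Category :=
  prodC (prodC (prodC (op A) A) (op C)) C.

Definition B1 (A C : Category) : Category := prodC A C.

(* ((z',x'),(z,x)) |-> (z',z,x',x) *)
Definition R1 (A C : Category) : Functor (prodC (op (B1 A C)) (B1 A C)) (Q A C).
Proof.
  refine (@Build_Functor (prodC (op (B1 A C)) (B1 A C)) (Q A C)
            (fun p : Ob (prodC (op (B1 A C)) (B1 A C)) => (fst (fst p), fst (snd p), snd (fst p), snd (snd p)) : Ob (Q A C))
            (fun (p q : Ob (prodC (op (B1 A C)) (B1 A C))) (f : @Hom (prodC (op (B1 A C)) (B1 A C)) p q) => (fst (fst f), fst (snd f), snd (fst f), snd (snd f)) : @Hom (Q A C) ((fst (fst p), fst (snd p), snd (fst p), snd (snd p)) : Ob (Q A C)) ((fst (fst q), fst (snd q), snd (fst q), snd (snd q)) : Ob (Q A C))) _ _).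
  - intros [[] []]; reflexivity.
  - intros [[] []] [[] []] [[] []] [[] []] [[] []]; reflexivity.
Defined.

Definition S1 (A C : Category) (Gam P : SetFunctor (Q A C)) : Type :=
  { h : forall y : Ob (B1 A C),
        precomp (R1 A C) Gam (y, y) -> precomp (R1 A C) P (y, y)
  | dinatural h }.

Definition B2 (A C : Category) : Category := prodC (prodC (op A) A) C.

(* ((a',b',x'),(a,b,x)) |-> (a,b) *)
Definition Rh (A C : Category)
  : Functor (prodC (op (B2 A C)) (B2 A C)) (prodC (op A) A).
Proof.
  refine (@Build_Functor (prodC (op (B2 A C)) (B2 A C)) (prodC (op A) A)
            (fun p : Ob (prodC (op (B2 A C)) (B2 A C)) => (fst (fst (snd p)), snd (fst (snd p))) : Ob (prodC (op A) A))
            (fun (p q : Ob (prodC (op (B2 A C)) (B2 A C))) (f : @Hom (prodC (op (B2 A C)) (B2 A C)) p q) => (fst (fst (snd f)), snd (fst (snd f))) : @Hom (prodC (op A) A) ((fst (fst (snd p)), snd (fst (snd p))) : Ob (prodC (op A) A)) ((fst (fst (snd q)), snd (fst (snd q))) : Ob (prodC (op A) A))) _ _).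
  - intros [[[] ?] [[] ?]]; reflexivity.
  - intros [[[] ?] [[] ?]] [[[] ?] [[] ?]] [[[] ?] [[] ?]]
           [[[] ?] [[] ?]] [[[] ?] [[] ?]]; reflexivity.
Defined.

(* ((a',b',x'),(a,b,x)) |-> (b',a',x',x) *)
Definition Rg (A C : Category)
  : Functor (prodC (op (B2 A C)) (B2 A C)) (Q A C).
Proof.
  refine (@Build_Functor (prodC (op (B2 A C)) (B2 A C)) (Q A C)
            (fun p : Ob (prodC (op (B2 A C)) (B2 A C)) => (snd (fst (fst p)), fst (fst (fst p)), snd (fst p), snd (snd p)) : Ob (Q A C))
            (fun (p q : Ob (prodC (op (B2 A C)) (B2 A C))) (f : @Hom (prodC (op (B2 A C)) (B2 A C)) p q) => (snd (fst (fst f)), fst (fst (fst f)), snd (fst f), snd (snd f)) : @Hom (Q A C) ((snd (fst (fst p)), fst (fst (fst p)), snd (fst p), snd (snd p)) : Ob (Q A C)) ((snd (fst (fst q)), fst (fst (fst q)), snd (fst q), snd (snd q)) : Ob (Q A C))) _ _).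
  - intros [[[] ?] [[] ?]]; reflexivity.
  - intros [[[] ?] [[] ?]] [[[] ?] [[] ?]] [[[] ?] [[] ?]]
           [[[] ?] [[] ?]] [[[] ?] [[] ?]]; reflexivity.
Defined.

(* ((a',b',x'),(a,b,x)) |-> (a,b,x',x) *)
Definition Rp (A C : Category)
  : Functor (prodC (op (B2 A C)) (B2 A C)) (Q A C).
Proof.
  refine (@Build_Functor (prodC (op (B2 A C)) (B2 A C)) (Q A C)
            (fun p : Ob (prodC (op (B2 A C)) (B2 A C)) => (fst (fst (snd p)), snd (fst (snd p)), snd (fst p), snd (snd p)) : Ob (Q A C))
            (fun (p q : Ob (prodC (op (B2 A C)) (B2 A C))) (f : @Hom (prodC (op (B2 A C)) (B2 A C)) p q) => (fst (fst (snd f)), snd (fst (snd f)), snd (fst f), snd (snd f)) : @Hom (Q A C) ((fst (fst (snd p)), snd (fst (snd p)), snd (fst p), snd (snd p)) : Ob (Q A C)) ((fst (fst (snd q)), snd (fst (snd q)), snd (fst q), snd (snd q)) : Ob (Q A C))) _ _).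
  - intros [[[] ?] [[] ?]]; reflexivity.
  - intros [[[] ?] [[] ?]] [[[] ?] [[] ?]] [[[] ?] [[] ?]]
           [[[] ?] [[] ?]] [[[] ?] [[] ?]]; reflexivity.
Defined.

(* (a',b',x',a,b,x) |-> hom_A(a,b) x Gamma(b',a',x',x) *)
Definition Src2 (A C : Category) (Gam : SetFunctor (Q A C))
  : SetFunctor (prodC (op (B2 A C)) (B2 A C)) :=
  sfprod (precomp (Rh A C) (homF A)) (precomp (Rg A C) Gam).

(* (a',b',x',a,b,x) |-> P(a,b,x',x) *)
Definition Tgt2 (A C : Category) (P : SetFunctor (Q A C))
  : SetFunctor (prodC (op (B2 A C)) (B2 A C)) :=
  precomp (Rp A C) P.

Definition S2 (A C : Category) (Gam P : SetFunctor (Q A C)) : Type :=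
  { alpha : forall y : Ob (B2 A C), Src2 Gam (y, y) -> Tgt2 P (y, y)
  | dinatural alpha }.

(* Main.v *)
Require Import Defs.
From Stdlib Require Import FunctionalExtensionality ProofIrrelevance.

Lemma Fm (B : Category) (G : SetFunctor B) p q r (f : @Hom B p q) (g : @Hom B q r) u :
  F1 G g (F1 G f u) = F1 G (comp g f) u.
Proof. symmetry; apply F1_comp. Qed.

Lemma F1_idQ (A C : Category) (G : SetFunctor (Q A C)) a b c d u :
  @F1 _ G (a,b,c,d) (a,b,c,d) ((idm a, idm b), idm c, idm d) u = u.
Proof. exact (@F1_id _ G (a,b,c,d) u). Qed.

Ltac norm := repeat rewrite Fm; simpl; repeat rewrite ?comp_id_l, ?comp_id_r; repeat rewrite F1_idQ.

Lemma hdin (A C : Category) (Gam P : SetFunctor (Q A C)) (h : S1 Gam P)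
  z1 z2 (g : @Hom A z1 z2) x1 x2 (c : @Hom C x1 x2) (u : Gam (z2, z1, x2, x1)) :
  @F1 _ P (z2,z2,x2,x2) (z1,z2,x1,x2) ((g, idm z2), c, idm x2)
     (proj1_sig h (z2,x2) (@F1 _ Gam (z2,z1,x2,x1) (z2,z2,x2,x2) ((idm z2, g), idm x2, c) u))
  = @F1 _ P (z1,z1,x1,x1) (z1,z2,x1,x2) ((idm z1, g), idm x1, c)
     (proj1_sig h (z1,x1) (@F1 _ Gam (z2,z1,x2,x1) (z1,z1,x1,x1) ((g, idm z1), c, idm x1) u)).
Proof. exact (proj2_sig h (z1,x1) (z2,x2) (g,c) u). Qed.

Definition Jf (A C : Category) (Gam P : SetFunctor (Q A C)) (h : S1 Gam P)
  : forall y : Ob (B2 A C), Src2 Gam (y, y) -> Tgt2 P (y, y) :=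
  fun y u =>
    @F1 _ P (fst (fst y), fst (fst y), snd y, snd y) (fst (fst y), snd (fst y), snd y, snd y)
      ((idm (fst (fst y)), fst u), idm (snd y), idm (snd y))
      (proj1_sig h (fst (fst y), snd y)
         (@F1 _ Gam (snd (fst y), fst (fst y), snd y, snd y) (fst (fst y), fst (fst y), snd y, snd y)
            ((fst u, idm (fst (fst y))), idm (snd y), idm (snd y)) (snd u))).

Lemma Jdin (A C : Category) (Gam P : SetFunctor (Q A C)) (h : S1 Gam P) : dinatural (Jf A C Gam P h).
Proof.
  intros [[a1 b1] x1] [[a2 b2] x2] [[g g'] c] [phi k].
  unfold Jf; simpl in *.
  set (m := comp g' (comp phi g)).
  transitivity (@F1 _ P (a2,a2,x1,x1) (a2,b2,x1,x2) ((idm a2, m), idm x1, c)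
     (proj1_sig h (a2,x1) (@F1 _ Gam (b2,a2,x2,x1) (a2,a2,x1,x1) ((m, idm a2), c, idm x1) k))).
  - transitivity (@F1 _ P (a2,b2,x2,x2) (a2,b2,x1,x2) ((idm a2, idm b2), c, idm x2)
     (@F1 _ P (a2,a2,x2,x2) (a2,b2,x2,x2) ((idm a2, m), idm x2, idm x2)
     (proj1_sig h (a2,x2) (@F1 _ Gam (a2,a2,x2,x1) (a2,a2,x2,x2) ((idm a2, idm a2), idm x2, c)
        (@F1 _ Gam (b2,a2,x2,x1) (a2,a2,x2,x1) ((m, idm a2), idm x2, idm x1) k))))).
    + norm. reflexivity.
    + transitivity (@F1 _ P (a2,a2,x1,x2) (a2,b2,x1,x2) ((idm a2, m), idm x1, idm x2)
        (@F1 _ P (a2,a2,x2,x2) (a2,a2,x1,x2) ((idm a2, idm a2), c, idm x2)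
        (proj1_sig h (a2,x2) (@F1 _ Gam (a2,a2,x2,x1) (a2,a2,x2,x2) ((idm a2, idm a2), idm x2, c)
        (@F1 _ Gam (b2,a2,x2,x1) (a2,a2,x2,x1) ((m, idm a2), idm x2, idm x1) k))))).
      * norm. reflexivity.
      * rewrite hdin. norm. reflexivity.
  - symmetry.
    set (n := comp g' phi).
    transitivity (@F1 _ P (a2,a1,x1,x1) (a2,b2,x1,x2) ((idm a2, n), idm x1, c)
        (@F1 _ P (a1,a1,x1,x1) (a2,a1,x1,x1) ((g, idm a1), idm x1, idm x1)
        (proj1_sig h (a1,x1) (@F1 _ Gam (a1,a2,x1,x1) (a1,a1,x1,x1) ((idm a1, g), idm x1, idm x1)
        (@F1 _ Gam (b2,a2,x2,x1) (a1,a2,x1,x1) ((n, idm a2), c, idm x1) k))))).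
    + unfold n. norm. rewrite ?comp_assoc. reflexivity.
    + rewrite hdin. unfold n, m. norm. rewrite ?comp_assoc. reflexivity.
Qed.

Lemma adin (A C : Category) (Gam P : SetFunctor (Q A C)) (al : S2 Gam P)
  a1 b1 x1 a2 b2 x2 (g: @Hom A a2 a1) (g': @Hom A b1 b2) (c: @Hom C x1 x2) (phi: @Hom A a1 b1) (k: Gam (b2,a2,x2,x1)) :
 @F1 _ P (a2,b2,x2,x2) (a2,b2,x1,x2) ((idm a2, idm b2), c, idm x2) (proj1_sig al ((a2,b2),x2) (comp g' (comp phi g), @F1 _ Gam (b2,a2,x2,x1) (b2,a2,x2,x2) ((idm b2, idm a2), idm x2, c) k))
 = @F1 _ P (a1,b1,x1,x1) (a2,b2,x1,x2) ((g,g'), idm x1, c) (proj1_sig al ((a1,b1),x1) (phi, @F1 _ Gam (b2,a2,x2,x1) (b1,a1,x1,x1) ((g',g), c, idm x1) k)).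
Proof.
  pose proof (proj2_sig al (a1,b1,x1) (a2,b2,x2) (g,g',c) (phi,k)) as H; simpl in H.
  rewrite comp_id_l, comp_id_r in H; exact H.
Qed.

Definition Kf (A C : Category) (Gam P : SetFunctor (Q A C)) (al : S2 Gam P)
  : forall y : Ob (B1 A C), precomp (R1 A C) Gam (y, y) -> precomp (R1 A C) P (y, y) :=
  fun y u => proj1_sig al ((fst y, fst y), snd y) (idm (fst y), u).

Lemma Kdin (A C : Category) (Gam P : SetFunctor (Q A C)) (al : S2 Gam P) : dinatural (Kf A C Gam P al).
Proof.
  intros [z1 x1] [z2 x2] [g c] u.
  unfold Kf; simpl in *.
  transitivity (@F1 _ P (z1,z2,x2,x2) (z1,z2,x1,x2) ((idm z1, idm z2), c, idm x2)
    (@F1 _ P (z2,z2,x2,x2) (z1,z2,x2,x2) ((g, idm z2), idm x2, idm x2)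
    (proj1_sig al ((z2,z2),x2) (idm z2, @F1 _ Gam (z2,z1,x2,x2) (z2,z2,x2,x2) ((idm z2, g), idm x2, idm x2)
       (@F1 _ Gam (z2,z1,x2,x1) (z2,z1,x2,x2) ((idm z2, idm z1), idm x2, c) u))))).
  { norm. reflexivity. }
  rewrite <- (@adin A C Gam P al z2 z2 x2 z1 z2 x2 g (idm z2) (idm x2) (idm z2)).
  transitivity (@F1 _ P (z1,z2,x2,x2) (z1,z2,x1,x2) ((idm z1, idm z2), c, idm x2)
    (proj1_sig al ((z1,z2),x2) (comp (idm z2) (comp g (idm z1)),
      @F1 _ Gam (z2,z1,x2,x1) (z2,z1,x2,x2) ((idm z2, idm z1), idm x2, c) u))).
  { norm. reflexivity. }
  rewrite (@adin A C Gam P al z1 z2 x1 z1 z2 x2 (idm z1) (idm z2) c g u).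
  transitivity (@F1 _ P (z1,z2,x1,x1) (z1,z2,x1,x2) ((idm z1, idm z2), idm x1, c)
    (@F1 _ P (z1,z2,x1,x1) (z1,z2,x1,x1) ((idm z1, idm z2), idm x1, idm x1)
    (proj1_sig al ((z1,z2),x1) (comp g (comp (idm z1) (idm z1)),
      @F1 _ Gam (z2,z1,x1,x1) (z2,z1,x1,x1) ((idm z2, idm z1), idm x1, idm x1)
      (@F1 _ Gam (z2,z1,x2,x1) (z2,z1,x1,x1) ((idm z2, idm z1), c, idm x1) u))))).
  { norm. reflexivity. }
  rewrite (@adin A C Gam P al z1 z1 x1 z1 z2 x1 (idm z1) g (idm x1) (idm z1)).
  norm. reflexivity.
Qed.

Lemma sig_ext (T : Type) (Pr : T -> Prop) (x y : sig Pr) : proj1_sig x = proj1_sig y -> x = y.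
Proof. destruct x as [x px], y as [y py]; simpl; intros ->; f_equal; apply proof_irrelevance. Qed.

Theorem mainTheorem2 (A C : Category) :
  exists J : forall Gam P : SetFunctor (Q A C), S1 Gam P -> S2 Gam P,
    (* J is a bijection, with the stated inverse *)
    (forall Gam P : SetFunctor (Q A C),
       exists K : S2 Gam P -> S1 Gam P,
         (forall h, K (J Gam P h) = h) /\
         (forall alpha, J Gam P (K alpha) = alpha) /\
         (forall alpha (z : Ob A) (x : Ob C) (k : Gam (z, z, x, x)),
             proj1_sig (K alpha) (z, x) k
             = proj1_sig alpha ((z, z), x) (idm z, k))) /\
    (* J(h)_{z,z,x}(id_z, k) = h_{z,x}(k) *)
    (forall (Gam P : SetFunctor (Q A C)) (h : S1 Gam P)
            (z : Ob A) (x : Ob C) (k : Gam (z, z, x, x)),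
        proj1_sig (J Gam P h) ((z, z), x) (idm z, k) = proj1_sig h (z, x) k) /\
    (* naturality in Gamma (contravariant) and P (covariant) *)
    (forall (Gam1 Gam2 P1 P2 : SetFunctor (Q A C))
            (theta : @NatTrans (Q A C) Gam2 Gam1) (phi : @NatTrans (Q A C) P1 P2)
            (h1 : S1 Gam1 P1) (h2 : S1 Gam2 P2),
        (forall (z : Ob A) (x : Ob C) (k : Gam2 (z, z, x, x)),
            proj1_sig h2 (z, x) k
            = phi (z, z, x, x) (proj1_sig h1 (z, x) (theta (z, z, x, x) k))) ->
        forall (a b : Ob A) (x : Ob C) (f : @Hom A a b) (k : Gam2 (b, a, x, x)),
          proj1_sig (J Gam2 P2 h2) ((a, b), x) (f, k)
          = phi (a, b, x, x)
              (proj1_sig (J Gam1 P1 h1) ((a, b), x) (f, theta (b, a, x, x) k))).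
Proof.
  exists (fun Gam P h => exist _ (Jf A C Gam P h) (Jdin A C Gam P h)).
  split; [| split].
  - intros Gam P.
    exists (fun al => exist _ (Kf A C Gam P al) (Kdin A C Gam P al)).
    split; [| split].
    + intros h. apply sig_ext; simpl.
      apply functional_extensionality_dep; intros [z x].
      apply functional_extensionality; intros u.
      unfold Kf, Jf; simpl. norm. reflexivity.
    + intros al. apply sig_ext; simpl.
      apply functional_extensionality_dep; intros [[a b] x].
      apply functional_extensionality; intros [f k].
      unfold Kf, Jf; simpl in *.
      rewrite <- (@adin A C Gam P al a a x a b x (idm a) f (idm x) (idm a)).
      norm. reflexivity.
    + intros; reflexivity.
  - intros Gam P h z x k. simpl. unfold Jf; simpl. norm. reflexivity.
  - intros Gam1 Gam2 P1 P2 theta phi h1 h2 H a b x f k.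
    simpl. unfold Jf; simpl.
    rewrite H. rewrite (@eta_nat _ _ _ theta). rewrite <- (@eta_nat _ _ _ phi). reflexivity.
Qed.
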